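(* Let $(\mathcal{A},\mu,\alpha)$ be a Hom-Malcev-admissible superalgebra. Then for each $n\geq 0$ the $n$th derived Hom-superalgebra $\mathcal{A}^{n}=(\mathcal{A},\mu^{(n)}=\alpha^{2^{n}-1}\circ\mu,\alpha^{2^{n}})$ is also a Hom-Malcev-admissible superalgebra.
   Context: $\mathcal{A}=\mathcal{A}_0\oplus\mathcal{A}_1$ is a $\mathbb{Z}_2$-graded vector space over an algebraically closed field $\mathbb{K}$ of characteristic $0$; $|x|$ is the parity of homogeneous $x$; even maps preserve parity. A Hom-superalgebra is a triple $(\mathcal{A},\mu,\alpha)$ with $\mu$ even bilinear, $\alpha$ even linear and $\alpha\circ\mu=\mu\circ(\alpha\otimes\alpha)$. Its super-commutator Hom-superalgebra is $\mathcal{A}^-=(\mathcal{A},[-,-],\alpha)$ with $[x,y]=\mu(x,y)-(-1)^{|x||y|}\mu(y,x)$. For a bracket, $\widetilde{J}(x,y,z)=[[x,y],\alpha(z)]-[\alpha(x),[y,z]]-(-1)^{|y||z|}[[x,z],\alpha(y)]$. A Hom-Malcev superalgebra is a Hom-superalgebra $(\mathcal{A},[-,-],\alpha)$ with $[x,y]=-(-1)^{|x||y|}[y,x]$ and, for all homogeneous $x,y,z,t$, $2[\alpha^{2}(t),\widetilde{J}(x,y,z)]=\widetilde{J}(\alpha(t),\alpha(x),[y,z])+(-1)^{|x|(|y|+|z|)}\widetilde{J}(\alpha(t),\alpha(y),[z,x])+(-1)^{|z|(|x|+|y|)}\widetilde{J}(\alpha(t),\alpha(z),[x,y])$. A Hom-superalgebra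 is Hom-Malcev-admissible if $\mathcal{A}^-$ is a Hom-Malcev superalgebra. *)

(* Defs.v *)
From mathcomp Require Import all_boot all_algebra.
Set Implicit Arguments. Unset Strict Implicit. Unset Printing Implicit Defensive.
Import GRing.Theory.
Local Open Scope ring_scope.

(* A Z2-graded vector space A = A0 (+) A1 is modelled as the product A0 * A1
   of two K-vector spaces; x is homogeneous of parity b iff its other
   component vanishes.  Parities are booleans (false = 0, true = 1). *)
Section Super.
Variables (K : fieldType) (A0 A1 : lmodType K).
Notation A := (A0 * A1)%type.

Definition homog (b : bool) (x : A) : Prop :=
  if b then x.1 = 0 else x.2 = 0.

Definition sgn (b : bool) : K := if b then -1 else 1.

Definition even_map (f : A -> A) : Prop :=
  forall b x, homog b x -> homog b (f x).

Definition even_bilin (m : A -> A -> A) : Prop :=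
  forall a b x y, homog a x -> homog b y -> homog (addb a b) (m x y).

Definition is_linear_map (f : A -> A) : Prop :=
  forall (k : K) x y, f (k *: x + y) = k *: f x + f y.

Definition is_bilinear (m : A -> A -> A) : Prop :=
  (forall z, is_linear_map (fun x => m x z)) /\ (forall x, is_linear_map (m x)).

Definition HomSuperalgebra (mu : A -> A -> A) (alpha : A -> A) : Prop :=
  [/\ is_bilinear mu, even_bilin mu, is_linear_map alpha, even_map alpha
    & forall x y, alpha (mu x y) = mu (alpha x) (alpha y)].

Definition comp (b : bool) (x : A) : A := if b then (0, x.2) else (x.1, 0).

(* super-commutator [x,y] = mu(x,y) - (-1)^{|x||y|} mu(y,x) on homogeneous
   x, y, extended bilinearly via the homogeneous decomposition x = x_0 + x_1. *)
Definition supercomm (mu : A -> A -> A) (x y : A) : A :=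
  \sum_(a <- [:: false; true]) \sum_(b <- [:: false; true])
     (mu (comp a x) (comp b y) - sgn (a && b) *: mu (comp b y) (comp a x)).

(* J~(x,y,z) = [[x,y],alpha z] - [alpha x,[y,z]] - (-1)^{|y||z|}[[x,z],alpha y],
   where py, pz are the parities of y and z. *)
Definition Jt (br : A -> A -> A) (alpha : A -> A) (py pz : bool) (x y z : A) : A :=
  br (br x y) (alpha z) - br (alpha x) (br y z) - sgn (py && pz) *: br (br x z) (alpha y).

Definition HomMalcevSuperalgebra (br : A -> A -> A) (alpha : A -> A) : Prop :=
  [/\ HomSuperalgebra br alpha,
      (forall a b x y, homog a x -> homog b y ->
          br x y = - (sgn (a && b) *: br y x))
    & (forall a b c d x y z t, homog a x -> homog b y -> homog c z -> homog d t ->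
          2%:R *: br (alpha (alpha t)) (Jt br alpha b c x y z) =
            Jt br alpha a (addb b c) (alpha t) (alpha x) (br y z)
          + sgn (a && addb b c) *: Jt br alpha b (addb c a) (alpha t) (alpha y) (br z x)
          + sgn (c && addb a b) *: Jt br alpha c (addb a b) (alpha t) (alpha z) (br x y))].

Definition HomMalcevAdmissible (mu : A -> A -> A) (alpha : A -> A) : Prop :=
  HomMalcevSuperalgebra (supercomm mu) alpha.

Definition derived_mul (mu : A -> A -> A) (alpha : A -> A) (n : nat) (x y : A) : A :=
  iter (2 ^ n - 1) alpha (mu x y).
Definition derived_twist (alpha : A -> A) (n : nat) : A -> A :=
  iter (2 ^ n) alpha.

End Super.

(* Main.v *)
Require Import Defs.
From mathcomp Require Import all_boot all_algebra.
From Stdlib Require Import FunctionalExtensionality.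
Local Open Scope ring_scope.
Import GRing.Theory.

Section H.
Variables (K : fieldType) (A0 A1 : lmodType K).
Notation A := (A0 * A1)%type.

Section Lin.
Variable f : A -> A.
Hypothesis hf : is_linear_map f.
Lemma lf0 : f 0 = 0.
Proof.
have := hf 1 0 0; rewrite scale1r addr0.
move/(congr1 (fun v => v - f 0)) => /=. by rewrite addrK subrr scale1r => <-.
Qed.
Lemma lfD x y : f (x + y) = f x + f y.
Proof. by rewrite -{1}[x]scale1r hf scale1r. Qed.
Lemma lfZ k x : f (k *: x) = k *: f x.
Proof. by rewrite -[k *: x]addr0 hf lf0 addr0. Qed.
Lemma lfN x : f (- x) = - f x.
Proof. by rewrite -scaleN1r lfZ scaleN1r. Qed.
End Lin.

Lemma iter_lin {a : A -> A} m : is_linear_map a -> is_linear_map (iter m a).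
Proof.
move=> ha; elim: m => [//|m IH] k x y /=.
by rewrite IH ha.
Qed.

Lemma iter_even {a : A -> A} m : even_map a -> even_map (iter m a).
Proof. move=> ha; elim: m => [//|m IH] b x hx /=; exact/ha/IH. Qed.

Lemma iter_mul {a : A -> A} {mu : A -> A -> A} m :
  (forall x y, a (mu x y) = mu (a x) (a y)) ->
  forall x y, iter m a (mu x y) = mu (iter m a x) (iter m a y).
Proof. move=> ha; elim: m => [//|m IH] x y /=; by rewrite IH ha. Qed.

Lemma iter_comm (a : A -> A) m x : iter m a (a x) = a (iter m a x).
Proof. by rewrite -iterSr iterS. Qed.

Lemma derived_HS (mu : A -> A -> A) (a : A -> A) m :
  HomSuperalgebra mu a ->
  HomSuperalgebra (fun x y => iter m a (mu x y)) (iter m.+1 a).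
Proof.
case=> [[hl hr] he hal hae hm].
have bl := iter_lin m hal.
split.
- split=> [z|x] k u v /=.
  + by rewrite hl (lfD _ bl) (lfZ _ bl).
  + by rewrite hr (lfD _ bl) (lfZ _ bl).
- by move=> p q x y hx hy; apply: (iter_even m hae); apply: he.
- exact: iter_lin.
- exact: iter_even.
- move=> x y.
  rewrite -(iter_mul m.+1 hm) -iterD -iterD addnC //.
Qed.

Lemma supercomm_comp (mu : A -> A -> A) (f : A -> A) :
  is_linear_map f ->
  supercomm (fun x y => f (mu x y)) = fun x y => f (supercomm mu x y).
Proof.
move=> hf; apply: functional_extensionality => x;
apply: functional_extensionality => y.
rewrite /supercomm !big_cons !big_nil /=.
by rewrite !(lfD _ hf, lfN _ hf, lfZ _ hf, lf0 _ hf).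
Qed.

Lemma Jt_mul (br : A -> A -> A) (a f : A -> A) p q x y z :
  is_linear_map f ->
  (forall u v, f (br u v) = br (f u) (f v)) ->
  (forall u, f (a u) = a (f u)) ->
  f (Jt br a p q x y z) = Jt br a p q (f x) (f y) (f z).
Proof.
move=> hf hm hc; rewrite /Jt.
by rewrite !(lfD _ hf, lfN _ hf, lfZ _ hf) !hm !hc.
Qed.

Lemma Jt_derived (br : A -> A -> A) (a : A -> A) m p q x y z :
  is_linear_map a ->
  (forall u v, a (br u v) = br (a u) (a v)) ->
  Jt (fun u v => iter m a (br u v)) (iter m.+1 a) p q x y z
  = iter m a (iter m a (Jt br a p q x y z)).
Proof.
move=> hl hm.
have bl := iter_lin m hl.
have fM := iter_mul m hm.
rewrite /Jt !iterSr -!fM.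
by rewrite !(lfD _ bl, lfN _ bl, lfZ _ bl).
Qed.

Lemma derived_Malcev (br : A -> A -> A) (a : A -> A) m :
  HomMalcevSuperalgebra br a ->
  HomMalcevSuperalgebra (fun x y => iter m a (br x y)) (iter m.+1 a).
Proof.
case=> HS hsk hid.
have HS' := derived_HS _ _ m HS.
case: HS => _ _ hl _ hm.
have bl := iter_lin m hl.
have fM := iter_mul m hm.
have fc : forall u, iter m a (a u) = a (iter m a u) by move=> u; apply: iter_comm.
split=> //.
- move=> p q x y hx hy /=.
  by rewrite (hsk p q x y hx hy) (lfN _ bl) (lfZ _ bl).
- move=> p q c d x y z t hx hy hz ht.
  rewrite !Jt_derived //.
  have -> : iter m.+1 a (iter m.+1 a t) = iter m a (iter m a (a (a t))).
    by rewrite !iterSr -fc.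
  rewrite /= -!fM -!fc -!(Jt_mul _ _ _ _ _ _ _ _ bl fM fc).
  rewrite -!(lfZ _ bl) -!(lfD _ bl).
  by rewrite (hid p q c d x y z t).
Qed.

End H.

Theorem mainTheorem6 (K : closedFieldType) (charK0 : [pchar K] =i pred0)
  (A0 A1 : lmodType K) (mu : A0 * A1 -> A0 * A1 -> A0 * A1) (alpha : A0 * A1 -> A0 * A1) :
  HomSuperalgebra mu alpha ->
  HomMalcevAdmissible mu alpha ->
  forall n : nat,
    HomSuperalgebra (derived_mul mu alpha n) (derived_twist alpha n) /\
    HomMalcevAdmissible (derived_mul mu alpha n) (derived_twist alpha n).
Proof.
move=> HS HM n.
have Em : (2 ^ n)%N = (2 ^ n - 1)%N.+1 by rewrite subn1 prednK // expn_gt0.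
have -> : derived_twist alpha n = iter (2 ^ n - 1)%N.+1 alpha.
  by rewrite /derived_twist -Em.
rewrite /HomMalcevAdmissible.
have -> : derived_mul mu alpha n = fun x y => iter (2 ^ n - 1)%N alpha (mu x y) by [].
move: (2 ^ n - 1)%N => m.
split; first exact: derived_HS.
case: (HS) => _ _ hl _ _.
rewrite (supercomm_comp _ _ _ _ _ (iter_lin _ _ _ m hl)).
exact: derived_Malcev.
Qed.
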